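(* Let $K$ be a good cubical $n$-complex and let $\xi\in K^{[n-2]}$ be an $(n-2)$-cube. Then the adjacency graph $\Gamma(\mathrm{St}_K(\xi))$ of the star of $\xi$ is cyclic, i.e. isomorphic either to the path graph $(\{1,\ldots,m\},\{\{1,2\},\ldots,\{m-1,m\}\})$ or to the cycle graph $(\{1,\ldots,m\},\{\{1,2\},\ldots,\{m-1,m\},\{m,1\}\})$ for some $m\ge1$.
   Context: A cubical $n$-complex is a collection of closed cells (''cubes''), closed under pairwise intersection, in which each $n$-cell $Q$ carries a homeomorphism $\phi_Q\colon Q\to[0,1]^n$ such that the cells contained in $Q$ are the preimages of the products of $\{0\},\{1\},[0,1]$, the structures agree on intersections via Euclidean isometries, and every cell lies in an $n$-cell; $K^{[k]}$ is the set of $k$-cubes. Two $n$-cubes are adjacent if they share a common $(n-1)$-cube face; the adjacency graph $\Gamma(P)$ has the $n$-cubes of $P$ as vertices and adjacent pairs as edges; $P$ is adjacently-connected if $\Gamma(P)$ is connected. For a subset $S$ of $K$, $\mathrm{Span}_K(S)$ is the smallest subcomplex containing $S$; the star of a cube $q$ is $\mathrm{St}_K(q)=\mathrm{Span}_K(\{Q\in K: q\subset Q\})$. An $(n-1)$-cube is one-sided if it is a face of exactly one $n$-cube, and $\partial K$ is the subcomplex spanned by one-sided $(n-1)$-cubes. $K$ is a good complex if: (1) $\Gamma(K)$ is connected; (2) each $(n-1)$-cube is a face of at most two $n$-cubes; (3) the star of each vertex and of each $(n-2)$-cube is an adjacently-connected cubical $n$-complex; (4) $\partial K$ is a cubical $(n-1)$-complex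 with at least one component, and each component of $\partial K$ is adjacently-connected. *)

(* Defs.v *)
From HB Require Import structures.
From mathcomp Require Import all_boot all_order all_algebra.
From mathcomp Require Import all_classical all_reals topology normedtype Rstruct Rstruct_topology.
From Stdlib Require Import Relations.

Set Implicit Arguments.
Unset Strict Implicit.
Unset Printing Implicit Defensive.

Import Order.TTheory GRing.Theory Num.Theory.
Local Open Scope classical_set_scope.
Local Open Scope ring_scope.

Notation Rr := Rdefinitions.R.

(* A face of [0,1]^n is a product of factors {0}, {1}, [0,1]; we code it by  *)
(* f : 'I_n -> option bool  (None = [0,1], Some false = {0}, Some true = {1}). *)
Definition cface (n : nat) := 'I_n -> option bool.

Definition face_set (n : nat) (f : cface n) : set 'rV[Rr]_n :=
  [set x | forall i : 'I_n, match f i with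
                            | None => 0 <= x ord0 i <= 1
                            | Some b => x ord0 i = (if b then 1 else 0)
                            end].

Definition unit_cube (n : nat) : set 'rV[Rr]_n := face_set (fun _ => None).

Definition face_dim (n : nat) (f : cface n) : nat := #|[pred i | f i == None]|.

Definition edist (n : nat) (x y : 'rV[Rr]_n) : Rr :=
  Num.sqrt (\sum_(i < n) (x ord0 i - y ord0 i) ^+ 2).

(* Data: a space X, the collection K of cells, the collection T of n-cells   *)
(* and the structure maps phi Q : X -> R^n (meaningful on Q for Q in T).     *)
Definition cubical_complex (n : nat) (X : topologicalType)
    (K T : set (set X)) (phi : set X -> X -> 'rV[Rr]_n) : Prop :=
  T `<=` K /\
  [/\
      (forall c1 c2, K c1 -> K c2 -> c1 `&` c2 = set0 \/ K (c1 `&` c2)),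
      (forall Q, T Q -> exists psi : 'rV[Rr]_n -> X,
          [/\ (forall x, Q x -> (@unit_cube n) (phi Q x)),
              (forall y, (@unit_cube n) y -> Q (psi y)),
              (forall x, Q x -> psi (phi Q x) = x),
              (forall y, (@unit_cube n) y -> phi Q (psi y) = y) &
              ({within Q, continuous (phi Q)} /\
               {within (@unit_cube n), continuous psi})]),
      (forall Q, T Q -> forall c, c `<=` Q ->
          (K c <-> exists f : cface n, c = Q `&` (phi Q @^-1` face_set f))),
      (forall Q1 Q2, T Q1 -> T Q2 -> exists A : 'rV[Rr]_n -> 'rV[Rr]_n,
          (forall x y, edist (A x) (A y) = edist x y) /\
          (forall x, (Q1 `&` Q2) x -> phi Q2 x = A (phi Q1 x))) &
      (forall c, K c -> exists Q, T Q /\ c `<=` Q)].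

Definition cell_dim (n : nat) (X : topologicalType) (K T : set (set X))
    (phi : set X -> X -> 'rV[Rr]_n) (c : set X) (k : nat) : Prop :=
  K c /\ exists Q (f : cface n),
    [/\ T Q, face_dim f = k & c = Q `&` (phi Q @^-1` face_set f)].

Definition adjacent (n : nat) (X : topologicalType) (K T : set (set X))
    (phi : set X -> X -> 'rV[Rr]_n) (d : nat) (Q1 Q2 : set X) : Prop :=
  [/\ T Q1, T Q2, Q1 <> Q2 &
      exists c, cell_dim K T phi c d.-1 /\ c `<=` Q1 `&` Q2].

Definition graph_connected (A : Type) (V : set A) (E : A -> A -> Prop) : Prop :=
  forall a b, V a -> V b -> clos_refl_trans A E a b.

(* Star of a cube q: the span of all cells containing q, i.e. all cells     *)
(* contained in some n-cell containing q; its n-cells are those containing q *)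
Definition star_top (X : Type) (T : set (set X)) (q : set X) : set (set X) :=
  [set Q | T Q /\ q `<=` Q].

Definition star_cells (X : Type) (K T : set (set X)) (q : set X) : set (set X) :=
  [set c | K c /\ exists Q, T Q /\ q `<=` Q /\ c `<=` Q].

Definition one_sided (n : nat) (X : topologicalType) (K T : set (set X))
    (phi : set X -> X -> 'rV[Rr]_n) (F : set X) : Prop :=
  cell_dim K T phi F n.-1 /\
  exists Q, [/\ T Q, F `<=` Q & forall Q', T Q' -> F `<=` Q' -> Q' = Q].

Definition bd_cells (n : nat) (X : topologicalType) (K T : set (set X))
    (phi : set X -> X -> 'rV[Rr]_n) : set (set X) :=
  [set c | K c /\ exists F, one_sided K T phi F /\ c `<=` F].

Definition good_complex (n : nat) (X : topologicalType) (K T : set (set X))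
    (phi : set X -> X -> 'rV[Rr]_n) : Prop :=
  [/\ cubical_complex K T phi,
      graph_connected T (adjacent K T phi n),
      (forall c Q1 Q2 Q3, cell_dim K T phi c n.-1 ->
          T Q1 -> T Q2 -> T Q3 -> c `<=` Q1 -> c `<=` Q2 -> c `<=` Q3 ->
          [\/ Q1 = Q2, Q1 = Q3 | Q2 = Q3]),
      (forall q, cell_dim K T phi q 0 \/ cell_dim K T phi q (n - 2) ->
          cubical_complex (star_cells K T q) (star_top T q) phi /\
          graph_connected (star_top T q)
            (adjacent (star_cells K T q) (star_top T q) phi n)) &
      [/\ (exists psi : set X -> X -> 'rV[Rr]_n.-1,
             cubical_complex (bd_cells K T phi) (one_sided K T phi) psi),
          (exists F, one_sided K T phi F) &
          (* two top cells of the boundary lying in the same component       *)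
          (* (chain of pairwise intersecting top cells) are joined by a path  *)
          (* of adjacent top cells of the boundary                            *)
          (forall F1 F2, clos_refl_trans (set X)
                (fun A B => [/\ one_sided K T phi A, one_sided K T phi B &
                                A `&` B !=set0]) F1 F2 ->
             one_sided K T phi F1 -> one_sided K T phi F2 ->
             clos_refl_trans (set X)
               (fun A B => [/\ one_sided K T phi A, one_sided K T phi B, A <> B &
                   exists c, cell_dim K T phi c (n - 2) /\ c `<=` A `&` B])
               F1 F2)]].

Definition path_edge (m : nat) (i j : 'I_m) : bool :=
  (i.+1 == j :> nat)%N || (j.+1 == i :> nat)%N.

Definition cycle_edge (m : nat) (i j : 'I_m) : bool :=
  (i != j) && (((i.+1 %% m)%N == j :> nat) || ((j.+1 %% m)%N == i :> nat)).

Definition graph_iso_ord (A : Type) (V : set A) (E : A -> A -> Prop)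
    (m : nat) (F : 'I_m -> 'I_m -> bool) : Prop :=
  exists g : 'I_m -> A,
    [/\ injective g, (forall i, V (g i)), (forall a, V a -> exists i, g i = a) &
        (forall i j, E (g i) (g j) <-> F i j)].

Definition cyclic_graph (A : Type) (V : set A) (E : A -> A -> Prop) : Prop :=
  exists m : nat, (1 <= m)%N /\
    (graph_iso_ord V E (@path_edge m) \/ graph_iso_ord V E (@cycle_edge m)).

(* Main.v *)
Require Import Defs.
From mathcomp Require Import all_boot all_order all_algebra.
From mathcomp Require Import all_classical all_reals topology normedtype Rstruct Rstruct_topology.
From mathcomp Require Import lra zify.
From Stdlib Require Import Relations.
Set Implicit Arguments. Unset Strict Implicit. Unset Printing Implicit Defensive.
Import Order.TTheory GRing.Theory Num.Theory.

Module CombM.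

Lemma modS_eq i j k : i < k.+1 -> j < k.+1 -> (i.+1 %% k.+1 == j) = (i.+1 == j) || (i == k) && (j == 0).
Proof. move=> ik jk; case: (eqVneq i k) => [->|h]; first by rewrite modnn; lia. by rewrite modn_small //; lia. Qed.

Section Comb.
Variable T : finType.
Variable e : rel T.
Hypothesis esym : ssrbool.symmetric e.
Hypothesis eirr : ssrbool.irreflexive e.
Hypothesis edeg : forall x a b c, e x a -> e x b -> e x c -> [|| a == b, a == c | b == c].
Hypothesis econn : forall (P : T -> Prop) x y, P x -> (forall u w, P u -> e u w -> P w) -> P y.

Definition upath x s := uniq (x :: s) && path e x s.

Lemma upath_size x s : upath x s -> size s < #|T|.
Proof. case/andP=> u _; have := max_card (mem (x :: s)); by rewrite (card_uniqP u). Qed.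

Variable x0 : T.

Lemma longest : exists x s, upath x s /\ forall y t, upath y t -> size t <= size s.
Proof.
pose P k := `[< exists x s, upath x s /\ size s = k >].
have exP : exists k, P k by exists 0; apply/asboolP; exists x0, [::]; by rewrite /upath /=.
have ubP : forall k, P k -> k <= #|T|.
  by move=> k /asboolP [x [s [/upath_size h <-]]]; apply: ltnW.
case: (ex_maxnP exP ubP) => k /asboolP [x [s [us sk]]] mx.
exists x, s; split => // y t ut; rewrite sk; apply: mx; apply/asboolP; by exists y, t.
Qed.

Section Longest.
Variables (x : T) (s : seq T).
Hypothesis us : upath x s.
Hypothesis mx : forall y t, upath y t -> size t <= size s.
Local Notation p := (x :: s).
Local Notation k := (size s).

Lemma uniq_p : uniq p. Proof. by case/andP: us. Qed.
Lemma path_p : path e x s. Proof. by case/andP: us. Qed.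

Lemma edge_p i : i < k -> e (nth x p i) (nth x p i.+1).
Proof. by move=> ik; have /pathP := path_p; apply. Qed.

Lemma neq_p i j : i < k.+1 -> j < k.+1 -> i != j -> nth x p i != nth x p j.
Proof. by move=> ik jk; rewrite nth_uniq // uniq_p. Qed.

Lemma front w : e x w -> w \in p.
Proof.
move=> xw; apply/negPn/negP => wp.
have : upath w p by rewrite /upath [uniq _]cons_uniq wp uniq_p /= esym xw path_p.
by move/mx; rewrite /= ltnn.
Qed.

Lemma back w : e (last x s) w -> w \in p.
Proof.
move=> xw; apply/negPn/negP => wp.
have : upath x (rcons s w).
  rewrite /upath -rcons_cons rcons_uniq wp uniq_p /= rcons_path path_p //.
by move/mx; rewrite size_rcons ltnn.
Qed.

Lemma deg_int i a : 0 < i < k -> e (nth x p i) a -> (a == nth x p i.-1) || (a == nth x p i.+1).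
Proof.
case/andP=> i0 ik ea.
have e1 : e (nth x p i) (nth x p i.-1).
  by rewrite esym; have := edge_p (i:=i.-1); rewrite prednK //; apply; lia.
have e2 := edge_p ik.
have := edeg e1 e2 ea; rewrite (negbTE (neq_p _ _ _)); try lia.
by rewrite /= ![_ == a]eq_sym.
Qed.

Lemma closed_p u w : u \in p -> e u w -> w \in p.
Proof.
move=> up uw.
have iu : index u p < k.+1 by rewrite -[k.+1]/(size p) index_mem.
have nu := nth_index x up.
case: (posnP (index u p)) => [i0|ip].
  by rewrite i0 /= in nu; apply: front; rewrite nu.
case: (ltnP (index u p) k) => [ik|ik].
  rewrite -nu in uw; case/orP: (deg_int (i:=index u p) (ltac:(lia)) uw) => /eqP ->;
  by apply: mem_nth; rewrite -[size p]/(k.+1); lia.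
apply: back; have ek : index u p = k by lia.
by rewrite (last_nth x) -ek nu.
Qed.

Lemma all_p y : y \in p.
Proof. apply: (econn (P := fun y => y \in p) (x:=x)); first by rewrite inE eqxx. exact: closed_p. Qed.

Lemma chord i j : i < j < k.+1 -> i.+1 < j -> e (nth x p i) (nth x p j) -> (i == 0) && (j == k).
Proof.
case/andP=> ij jk ij1 eij.
case: (ltnP j k) => [jk'|jk'].
  have := deg_int (i:=j) (ltac:(lia)) (a := nth x p i); rewrite esym => /(_ eij).
  by rewrite !(negbTE (neq_p _ _ _)) //; lia.
have -> : j = k by lia.
case: (posnP i) => [_|i0]; first by rewrite eqxx.
have := deg_int (i:=i) (ltac:(lia)) eij.
by rewrite !(negbTE (neq_p _ _ _)) //; lia.
Qed.


Lemma last_p : last x s = nth x p k.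
Proof. exact: last_nth. Qed.

Lemma edge_char i j : i < k.+1 -> j < k.+1 ->
  e (nth x p i) (nth x p j) =
  [|| i.+1 == j, j.+1 == i | e x (last x s) && ((i == 0) && (j == k) || (j == 0) && (i == k))].
Proof.
wlog ij : i j / i <= j.
  move=> H ik jk; case: (leqP i j) => h; first exact: H.
  rewrite esym H //; last exact: ltnW.
  by case: (i.+1 == j); case: (j.+1 == i); case: (e _ _); case: (i == 0); case: (j == k); case: (j == 0); case: (i == k).
move=> ik jk; apply/idP/idP.
  move=> eij; case: (ltngtP i j) => h.
  - case: (eqVneq i.+1 j) => [_|h1]; first by [].
    have := chord (i:=i) (j:=j) (ltac:(lia)) (ltac:(lia)) eij.
    case/andP=> /eqP i0 /eqP jk'; move: eij; rewrite i0 jk' -last_p => ->.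
    by rewrite !eqxx /= ?orbT. 
  - lia.
  - by move: eij; rewrite h eirr.
case/or3P.
- by move/eqP=> ji; rewrite -ji; apply: edge_p; lia.
- by move/eqP=> ji; lia.
case/andP=> ex /orP[] /andP[/eqP -> /eqP ->]; first by rewrite -last_p.
by rewrite esym -last_p.
Qed.

End Longest.

Lemma comb_main : exists m, 0 < m /\ exists g : 'I_m -> T,
  [/\ injective g, (forall y, exists i, g i = y) &
      ((forall i j, e (g i) (g j) = path_edge i j) \/ (forall i j, e (g i) (g j) = cycle_edge i j))].
Proof.
have [x [s [us mx]]] := longest.
exists (size s).+1; split => //.
exists (fun i : 'I_(size s).+1 => nth x (x :: s) i); split.
- move=> i j /eqP; rewrite nth_uniq //; first by move/eqP/val_inj.
  by case/andP: us.
- move=> y; have yp := all_p us mx y.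
  have iy : index y (x :: s) < size (x :: s) by rewrite index_mem.
  by exists (Ordinal iy); rewrite /= nth_index.
case: (boolP (e x (last x s) && (2 <= size s))) => [/andP[ex k2]|hb].
  right => i j; rewrite edge_char // ex /= /cycle_edge.
  have := ltn_ord i; have := ltn_ord j => jk ik.
  rewrite !modS_eq // -(inj_eq val_inj) /=; move: ik jk k2; move: (nat_of_ord i) (nat_of_ord j) => a b; set c := size s; clearbody c => *; lia.
left => i j; rewrite edge_char // /path_edge.
have := ltn_ord i; have := ltn_ord j => jk ik.
have hs : e x (last x s) -> 0 < size s by case: (s) => //=; rewrite eirr.
move: hb hs; case: (e x (last x s)) => /=; last by rewrite !orbF.
rewrite -leqNgt => hk /(_ isT) hs; move: hs; move: ik jk hk; move: (nat_of_ord i) (nat_of_ord j) => a b; set c := size s; clearbody c => *; lia.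
Qed.
End Comb.

End CombM.
Import CombM.

Module GeoM.
Local Open Scope classical_set_scope.
Local Open Scope ring_scope.

Section Faces.
Variable n : nat.

Definition corner (b0 : bool) (f : cface n) : 'rV[Rr]_n :=
  \row_i (match f i with None => (if b0 then 1 else 0) | Some b => if b then 1 else 0 end).

Lemma corner_face b0 f : face_set f (corner b0 f).
Proof. by move=> i; rewrite mxE; case: (f i) => [b|] //; case: b0; rewrite ?lexx ?ler01. Qed.

Lemma face_cube (f : cface n) y : face_set f y -> unit_cube y.
Proof.
move=> fy i; have := fy i; rewrite /=.
by case: (f i) => [[]|] // ->; rewrite ?lexx ?ler01.
Qed.

Definition sqd (x y : 'rV[Rr]_n) := \sum_(i < n) (x ord0 i - y ord0 i) ^+ 2.

Lemma face_sqd f x y : face_set f x -> face_set f y -> sqd x y <= (face_dim f)%:R.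
Proof.
move=> fx fy; rewrite /sqd (bigID (fun i => f i == None)) /=.
rewrite [X in _ + X]big1 ?addr0; last first.
  move=> i; have := fx i; have := fy i; case: (f i) => // b -> -> _.
  by rewrite subrr expr0n.
apply: le_trans (_ : \sum_(i | f i == None) (1 : Rr) <= _).
  apply: ler_sum => i /eqP fi; have := fx i; have := fy i; rewrite fi.
  case/andP=> ? ? /andP[] ? ?; nra.
by rewrite sumr_const /face_dim.
Qed.

Lemma corner_sqd f : sqd (corner false f) (corner true f) = (face_dim f)%:R.
Proof.
rewrite /sqd (bigID (fun i => f i == None)) /=.
rewrite [X in _ + X]big1 ?addr0; last first.
  by move=> i; rewrite !mxE; case: (f i) => // b _; rewrite subrr expr0n.
rewrite (eq_bigr (fun _ => 1)); first by rewrite sumr_const /face_dim.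
by move=> i /eqP fi; rewrite !mxE fi; rewrite sub0r sqrrN expr1n.
Qed.


Lemma face_incl (f g : cface n) : face_set f `<=` face_set g -> forall i, g i = None \/ g i = f i.
Proof.
move=> H i; have h0 := H _ (corner_face false f) i; have h1 := H _ (corner_face true f) i.
move: h0 h1; rewrite !mxE; case: (g i) => [b|]; last by left.
right; move: h0 h1; case: (f i) => [b'|] /=.
  by case: b; case: b' => // /eqP; rewrite ?oner_eq0 // eq_sym oner_eq0.
by move=> <- /eqP; rewrite oner_eq0.
Qed.

Lemma dim_le_S (g : cface n) (S : {set 'I_n}) :
  (forall i, i \in S -> g i != None) -> (face_dim g + #|S| <= n)%N.
Proof.
move=> H.
have sub : [pred i | g i == None] \subset ~: S.
  apply/fintype.subsetP => i; rewrite !inE /=; apply: contraL => iS; exact: H.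
have := subset_leq_card sub; have := cardsC S; rewrite card_ord /face_dim => h1 h2.
by rewrite -[X in (_ <= X)%N]h1 addnC leq_add2l.
Qed.

Lemma face_dim_all : face_dim (fun _ : 'I_n => None) = n.
Proof. by rewrite /face_dim -[RHS]card_ord; apply: eq_card => i. Qed.

Lemma face_dim_le (g : cface n) : (face_dim g <= n)%N.
Proof. by rewrite /face_dim -[X in (_ <= X)%N]card_ord max_card. Qed.

Lemma dim_n_all (g : cface n) : face_dim g = n -> forall i, g i = None.
Proof.
move=> h i; apply/eqP/negPn/negP => gi.
have H : forall j, j \in [set i]%SET -> g j != None by move=> j /set1P ->.
by have := dim_le_S H; rewrite cards1 h addn1 ltnn.
Qed.

End Faces.

Section Complex.
Variables (n : nat) (X : topologicalType) (K T : set (set X)) (phi : set X -> X -> 'rV[Rr]_n).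
Hypothesis CC : cubical_complex K T phi.

Lemma chart_onto Q : T Q -> forall y, unit_cube y -> exists x, Q x /\ phi Q x = y.
Proof.
move=> TQ y uy; case: CC => _ [_ Hhom _ _ _]; have [psi [_ h2 _ h4 _]] := Hhom Q TQ.
by exists (psi y); split; [apply: h2 | apply: h4].
Qed.

Lemma chart_cube Q x : T Q -> Q x -> unit_cube (phi Q x).
Proof.
move=> TQ Qx; case: CC => _ [_ Hhom _ _ _]; have [psi [h1 _ _ _ _]] := Hhom Q TQ.
exact: h1.
Qed.

Lemma cell_face_img Q c (f : cface n) : T Q -> c = Q `&` (phi Q @^-1` face_set f) ->
  forall y, face_set f y -> exists x, c x /\ phi Q x = y.
Proof.
move=> TQ -> y fy; have [x [Qx px]] := chart_onto TQ (face_cube fy).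
by exists x; split => //; split => //=; rewrite /preimage /= px.
Qed.

Lemma cell_incl Q c1 c2 (f1 f2 : cface n) : T Q -> c1 = Q `&` (phi Q @^-1` face_set f1) ->
  c2 = Q `&` (phi Q @^-1` face_set f2) -> c1 `<=` c2 -> face_set f1 `<=` face_set f2.
Proof.
move=> TQ e1 e2 sub y fy; have [x [c1x <-]] := cell_face_img TQ e1 fy.
by have := sub _ c1x; rewrite e2 => -[].
Qed.

Lemma CI Q1 Q2 c (f1 f2 : cface n) : T Q1 -> T Q2 ->
  c = Q1 `&` (phi Q1 @^-1` face_set f1) -> c = Q2 `&` (phi Q2 @^-1` face_set f2) ->
  (face_dim f1 <= face_dim f2)%N.
Proof.
move=> T1 T2 e1 e2.
have [x [cx px]] := cell_face_img T1 e1 (corner_face false f1).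
have [y [cy py]] := cell_face_img T1 e1 (corner_face true f1).
case: CC => _ [_ _ _ Hiso _]; have [A [Aiso HA]] := Hiso Q1 Q2 T1 T2.
have inQ z : c z -> (Q1 `&` Q2) z.
  by move=> cz; split; [move: cz; rewrite e1 => -[] | move: cz; rewrite e2 => -[]].
have inF z : c z -> face_set f2 (phi Q2 z) by move=> cz; move: cz; rewrite e2 => -[].
have E : Defs.edist (phi Q2 x) (phi Q2 y) = Defs.edist (corner false f1) (corner true f1).
  by rewrite (HA _ (inQ _ cx)) (HA _ (inQ _ cy)) Aiso px py.
have E1 : Defs.edist (corner false f1) (corner true f1) = Num.sqrt ((face_dim f1)%:R).
  by rewrite -corner_sqd.
have L : Defs.edist (phi Q2 x) (phi Q2 y) <= Num.sqrt ((face_dim f2)%:R).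
  by apply: ler_wsqrtr; apply: face_sqd; apply: inF.
by move: L; rewrite E E1 ler_sqrt ?ler0n // ler_nat.
Qed.
End Complex.


Definition gi (n : nat) (fx : cface n) (i : 'I_n) : cface n :=
  fun j => if j == i then fx i else None.

Section Star.
Variables (n : nat) (X : topologicalType) (K T : set (set X)) (phi : set X -> X -> 'rV[Rr]_n) (xi : set X).
Hypothesis n2 : (2 <= n)%N.
Hypothesis CC : cubical_complex K T phi.
Hypothesis xid : cell_dim K T phi xi (n - 2).

Local Notation V := (star_top T xi).
Local Notation E := (adjacent (star_cells K T xi) (star_top T xi) phi n).

Lemma xi_ne : exists x, xi x.
Proof.
have [_ [Q0 [f0 [T0 _ e0]]]] := xid.
by have [x [cx _]] := cell_face_img CC T0 e0 (corner_face false f0); exists x.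
Qed.

Lemma all_face (Q : set X) : T Q -> Q = Q `&` (phi Q @^-1` face_set (fun _ : 'I_n => None)).
Proof.
move=> TQ; apply/seteqP; split => x; last by case.
by move=> Qx; split => //; apply: (chart_cube CC).
Qed.

Lemma neighbor_facet Q Q' (fx : cface n) : V Q -> xi = Q `&` (phi Q @^-1` face_set fx) -> E Q Q' ->
  exists i, [/\ fx i != None, Q `&` Q' = Q `&` (phi Q @^-1` face_set (gi fx i)),
             K (Q `&` Q') & face_dim (gi fx i) = n.-1].
Proof.
move=> VQ ex [_ VQ' neq [c [cd csub]]].
case: VQ => TQ xQ; case: VQ' => TQ' xQ'.
case: cd => [[Kc _] [Q'' [h0 [V'' d0 e0]]]]; case: V'' => T'' _.
case: (CC) => TK [Hint Hhom Hface Hiso Hcov].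
have [x0 x0xi] := xi_ne.
have KD : K (Q `&` Q').
  case: (Hint _ _ (TK _ TQ) (TK _ TQ')) => // D0.
  have : (Q `&` Q') x0 by split; [apply: xQ | apply: xQ'].
  by rewrite D0.
have [g eg] := (Hface Q TQ (Q `&` Q') (fun x => @proj1 _ _)).1 KD.
have [h eh] := (Hface Q TQ c (fun x cx => (csub x cx).1)).1 Kc.
have dh := CI CC T'' TQ e0 eh; rewrite d0 in dh.
have ih := face_incl (cell_incl CC TQ eh eg csub).
have ix := face_incl (cell_incl CC TQ ex eg (fun x xx => conj (xQ x xx) (xQ' x xx))).
have [i gi0] : exists i, g i != None.
  apply/not_existsP => allN.
  have gN : forall j, g j = None by move=> j; have := allN j; case: (g j).
  have QQ' : Q `<=` Q'.
    move=> x Qx; have : (Q `&` Q') x.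
      by rewrite eg; split => //; rewrite /preimage /= => j; rewrite gN; apply: (chart_cube CC).
    by case.
  have [g2 eg2] := (Hface Q' TQ' Q QQ').1 (TK _ TQ).
  have := CI CC TQ TQ' (all_face TQ) eg2; rewrite face_dim_all => d2.
  have g2N := dim_n_all (anti_leq (introT andP (conj (face_dim_le g2) d2))).
  apply: neq; apply/seteqP; split => // x Q'x; rewrite eg2; split => //.
  by move=> j; rewrite g2N; apply: (chart_cube CC).
have gfx : g i = fx i by case: (ix i) => // gi'; rewrite gi' in gi0.
exists i.
have fxi : fx i != None by rewrite -gfx.
have ggi : g = gi fx i.
  apply: funext => j; rewrite /gi; case: eqP => [->//|ji].
  apply/eqP/negPn/negP => gj.
  have S2 : forall k, k \in [set i; j]%SET -> g k != None.
    by move=> k /set2P [] ->.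
  have := dim_le_S S2; rewrite cards2.
  have -> : (i != j) by apply/eqP => ij; apply: ji.
  have hg : (face_dim h <= face_dim g)%N.
    apply: subset_leq_card; apply/fintype.subsetP => k; rewrite !inE => /eqP hk.
    by case: (ih k) => ->; rewrite ?hk.
  move=> le; have := leq_trans dh hg; move: le n2; clear; move=> *; lia.
split => //; first by rewrite eg ggi.
apply/anti_leq/andP; split.
  have S1 : forall k, k \in [set i]%SET -> gi fx i k != None.
    by move=> k /set1P ->; rewrite /gi eqxx.
  by have := dim_le_S S1; rewrite cards1; move=> *; lia.
rewrite -ggi; apply: leq_trans dh _.
apply: subset_leq_card; apply/fintype.subsetP => k; rewrite !inE => /eqP hk.
by case: (ih k) => ->; rewrite ?hk.
Qed.


Hypothesis two : forall c Q1 Q2 Q3, cell_dim K T phi c n.-1 ->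
  T Q1 -> T Q2 -> T Q3 -> c `<=` Q1 -> c `<=` Q2 -> c `<=` Q3 ->
  [\/ Q1 = Q2, Q1 = Q3 | Q2 = Q3].

Lemma deg Q a b c : E Q a -> E Q b -> E Q c -> [\/ a = b, a = c | b = c].
Proof.
move=> Ea Eb Ec; have VQ : V Q by case: Ea.
case: (VQ) => TQ xQ.
case: (CC) => TK [_ _ Hface _ _].
have [Kxi [Q0 [f0 [T0 d0 e0]]]] := xid.
have [fx ex] := (Hface Q TQ xi xQ).1 Kxi.
have dx := CI CC T0 TQ e0 ex; rewrite d0 in dx.
have same : forall a' b' ia, E Q a' -> E Q b' ->
    Q `&` a' = Q `&` (phi Q @^-1` face_set (gi fx ia)) ->
    Q `&` b' = Q `&` (phi Q @^-1` face_set (gi fx ia)) ->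
    K (Q `&` a') -> face_dim (gi fx ia) = n.-1 -> a' = b'.
  move=> a' b' ia Ea' Eb' ea eb Ka da.
  have cd : cell_dim K T phi (Q `&` a') n.-1 by split => //; exists Q, (gi fx ia); split.
  case: Ea' => _ [Ta' _] nea _; case: Eb' => _ [Tb' _] neb _.
  have s1 : Q `&` a' `<=` Q by move=> x [].
  have s2 : Q `&` a' `<=` a' by move=> x [].
  have s3 : Q `&` a' `<=` b' by rewrite ea -eb => x [].
  by case: (two cd TQ Ta' Tb' s1 s2 s3).
have [ia [fa ea Ka da]] := neighbor_facet VQ ex Ea.
have [ib [fb eb Kb db]] := neighbor_facet VQ ex Eb.
have [ic [fc ec Kc dc]] := neighbor_facet VQ ex Ec.
case: (eqVneq ia ib) => [iab|nab].
  by constructor 1; apply: (same _ _ ia) => //; rewrite eb iab.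
case: (eqVneq ia ic) => [iac|nac].
  by constructor 2; apply: (same _ _ ia) => //; rewrite ec iac.
case: (eqVneq ib ic) => [ibc|nbc].
  by constructor 3; apply: (same _ _ ib) => //; rewrite ec ibc.
have S3 : forall k, k \in [set ia; ib; ic]%SET -> fx k != None.
  by move=> k; rewrite !inE => /orP [/orP []|] /eqP ->.
have := dim_le_S S3.
have -> : #|[set ia; ib; ic]%SET| = 3%N.
  by rewrite finset.setUC cardsU1 cards2 !inE negb_or eq_sym nac eq_sym nbc nab.
move: dx n2; clear; move=> *; lia.
Qed.

End Star.

End GeoM.
Import GeoM.


Local Open Scope classical_set_scope.

Theorem lemma3p16 (n : nat) (X : topologicalType) (K T : set (set X))
    (phi : set X -> X -> 'rV[Rr]_n) (xi : set X) :
  (2 <= n)%N ->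
  finite_set K ->
  good_complex K T phi ->
  cell_dim K T phi xi (n - 2) ->
  cyclic_graph (star_top T xi)
    (adjacent (star_cells K T xi) (star_top T xi) phi n).
Proof.
move=> n2 finK [CC conn two starP bd] xid.
have [_ sconn] := starP xi (or_intror xid).
set V := star_top T xi; set E := adjacent (star_cells K T xi) (star_top T xi) phi n.
have VK : V `<=` K by move=> A [TA _]; case: CC => TK _; apply: TK.
have [s Vs] := (finite_seqP V).1 (sub_finite_set VK finK).
set L := undup s.
have VL A : V A <-> A \in L by rewrite /L mem_undup Vs.
have uL : uniq L by apply: undup_uniq.
set N := size L.
pose h (i : 'I_N) := nth set0 L i.
have hV i : V (h i) by apply/VL; apply: mem_nth.
have hinj : injective h.
  by move=> i j /eqP; rewrite /h nth_uniq // => /eqP /val_inj.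
have hsurj A : V A -> exists i, h i = A.
  move=> /VL AL; have iA : (index A L < N)%N by rewrite index_mem.
  by exists (Ordinal iA); rewrite /h /= nth_index.
have Esym A B : E A B -> E B A.
  by case=> VA VB nab [c [cd cs]]; split => //; [by move=> ab; apply: nab | exists c; split => // x /cs []].
have EV A B : E A B -> V B by case.
pose e : rel 'I_N := fun i j => `[< E (h i) (h j) >].
have esym : ssrbool.symmetric e.
  by move=> i j; apply/asboolP/asboolP; apply: Esym.
have eirr : ssrbool.irreflexive e by move=> i; apply/asboolP => -[_ _ nab _].
have edeg : forall x a b c, e x a -> e x b -> e x c -> [|| a == b, a == c | b == c].
  move=> x a b c /asboolP ea /asboolP eb /asboolP ec.
  case: (deg n2 CC xid two ea eb ec) => /hinj ->; by rewrite eqxx ?orbT.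
have econn : forall (P : 'I_N -> Prop) x y, P x -> (forall u w, P u -> e u w -> P w) -> P y.
  move=> P x y Px Pcl.
  have := sconn _ _ (hV x) (hV y).
  move/clos_rt_rt1n_iff.
  have gen : forall A B, clos_refl_trans_1n (set X) E A B -> forall i, h i = A -> P i -> exists j, h j = B /\ P j.
    move=> A B; elim => [A0 | A0 A1 B0 E01 _ IH] i hi Pi; first by exists i.
    have [j hj] := hsurj _ (EV _ _ E01).
    apply: (IH j hj); apply: (Pcl i) => //; apply/asboolP; by rewrite hi hj.
  by move/gen => /(_ x erefl Px) [j [/hinj -> Pj]].
have [Q0 VQ0] : exists Q, V Q.
  by have [_ [Q0 [f0 [T0 _ e0]]]] := xid; exists Q0; split => //; rewrite e0 => x [].
have [x0 _] := hsurj _ VQ0.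
have [m [m0 [g [ginj gsurj ge]]]] := comb_main esym eirr edeg econn x0.
exists m; split => //.
have iso : forall F : 'I_m -> 'I_m -> bool, (forall i j, e (g i) (g j) = F i j) -> graph_iso_ord V E F.
  move=> F eF; exists (fun i => h (g i)); split.
  - by move=> i j /hinj /ginj.
  - by move=> i; apply: hV.
  - by move=> A /hsurj [j <-]; have [i <-] := gsurj j; exists i.
  - by move=> i j; rewrite -eF; split => [H|/asboolP //]; apply/asboolP.
by case: ge => H; [left | right]; apply: iso.
Qed.
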